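(* Let $\mathcal{S}\colon\mathbf{Conv}\to\mathbf{Mod}_{\mathbb{R}_{\geq0}}$ be the left adjoint to the inclusion functor $\mathbf{Mod}_{\mathbb{R}_{\geq0}}\to\mathbf{Conv}$, given on a convex set $X$ by $\mathcal{S}(X)=\{0\}+\mathbb{R}_{>0}\times X$ with $u+0=u=0+u$, $(s,x)+(t,y)=\big(s+t,\ \tfrac{s}{s+t}x+\tfrac{t}{s+t}y\big)$, and scalar multiplication $s\bullet 0=0$, $0\bullet u=0$, $s\bullet(t,x)=(s t,x)$ for $s\neq0$. For a finite-dimensional complex Hilbert space $H$, the transpose of the inclusion $\mathcal{DM}(H)\hookrightarrow\mathcal{Pos}(H)$ (an affine map) is an isomorphism $\mathcal{S}(\mathcal{DM}(H))\cong\mathcal{Pos}(H)$ in $\mathbf{Mod}_{\mathbb{R}_{\geq0}}$. Consequently $\mathcal{S}\circ\mathcal{DM}\cong\mathcal{Pos}$ as functors $\mathbf{FdHilb}_{\mathrm{Un}}\to\mathbf{Mod}_{\mathbb{R}_{\geq0}}$.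
   Context: $\mathbf{Conv}$ is the category of convex sets and affine maps (algebras of the finitely supported distribution monad on sets). $\mathbf{Mod}_{\mathbb{R}_{\geq0}}$ is the category of modules over the semiring $\mathbb{R}_{\geq0}$ (commutative monoids with unital, associative scalar multiplication by non-negative reals, additive in each argument) and linear maps; every such module is a convex set via its linear structure, giving the inclusion functor. $\mathbf{FdHilb}_{\mathrm{Un}}$ is the category of finite-dimensional complex Hilbert spaces and unitary maps. $\mathcal{Pos}(H)$ is the $\mathbb{R}_{\ge0}$-module of positive operators on $H$ ($\langle Ax,x\rangle\ge0$ for all $x$), and $\mathcal{DM}(H)=\{A\in\mathcal{Pos}(H)\mid \mathrm{tr}(A)=1\}$ the convex set of density operators; both are functorial in unitaries $U$ via $A\mapsto UAU^\dagger$. *)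

(* Defs.v *)
From HB Require Import structures.
From mathcomp Require Import all_boot all_order all_algebra.
From mathcomp Require Import complex.
From mathcomp Require Import reals.
Set Implicit Arguments. Unset Strict Implicit. Unset Printing Implicit Defensive.
Import Order.TTheory GRing.Theory Num.Theory.
Local Open Scope ring_scope.

(* A finite-dimensional complex Hilbert space H is modelled as C^n with
   C = R[i], R the real numbers (any realType), and the standard inner
   product <x,y> = \sum_i x_i * conj(y_i). *)

Definition herm_adj (R : realType) (n : nat) (A : 'M[R[i]]_n) : 'M[R[i]]_n :=
  (map_mx Num.conj A)^T.

Definition qform (R : realType) (n : nat) (A : 'M[R[i]]_n) (x : 'cV[R[i]]_n)
  : R[i] := \sum_i (A *m x) i ord0 * Num.conj (x i ord0).

Definition is_pos (R : realType) (n : nat) (A : 'M[R[i]]_n) : Prop :=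
  forall x : 'cV[R[i]]_n, 0 <= qform A x.

Definition is_density (R : realType) (n : nat) (A : 'M[R[i]]_n) : Prop :=
  is_pos A /\ \tr A = 1.

(* Morphisms of FdHilb_Un on C^n: unitary matrices *)
Definition unitary_mx (R : realType) (n : nat) (U : 'M[R[i]]_n) : Prop :=
  U *m herm_adj U = 1%:M /\ herm_adj U *m U = 1%:M.

Definition rscale (R : realType) (n : nat) (s : R) (A : 'M[R[i]]_n) :
  'M[R[i]]_n := (s%:C)%C *: A.

(* ---- The free R>=0-module S(X) = {0} + R_{>0} x X, for X = DM(H). ----
   Elements are represented in the ambient type; [S_valid] carves out the
   genuine elements (0, or (s, rho) with s > 0 and rho a density operator). *)
Inductive Selt (R : realType) (n : nat) : Type :=
  | S0 : Selt R n
  | Spt : R -> 'M[R[i]]_n -> Selt R n.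
Arguments S0 {R n}.

Definition S_valid (R : realType) (n : nat) (u : Selt R n) : Prop :=
  match u with
  | S0 => True
  | Spt s rho => 0 < s /\ is_density rho
  end.

Definition S_add (R : realType) (n : nat) (u v : Selt R n) : Selt R n :=
  match u, v with
  | S0, _ => v
  | _, S0 => u
  | Spt s x, Spt t y =>
      Spt (s + t) (rscale (s / (s + t)) x + rscale (t / (s + t)) y)
  end.

Definition S_scale (R : realType) (n : nat) (s : R) (u : Selt R n) : Selt R n :=
  match u with
  | S0 => S0
  | Spt t x => if s == 0 then S0 else Spt (s * t) x
  end.

(* Functorial action S(DM(U)) of a unitary U: (s, rho) |-> (s, U rho U^dag) *)
Definition S_map (R : realType) (n : nat) (U : 'M[R[i]]_n) (u : Selt R n)
  : Selt R n :=
  match u with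
  | S0 => S0
  | Spt s rho => Spt s (U *m rho *m herm_adj U)
  end.

(* Transpose (under the adjunction S -| inclusion) of the affine inclusion
   DM(H) -> Pos(H): the unique linear extension 0 |-> 0, (s,rho) |-> s rho. *)
Definition transpose_incl (R : realType) (n : nat) (u : Selt R n)
  : 'M[R[i]]_n :=
  match u with
  | S0 => 0
  | Spt s rho => rscale s rho
  end.

(* Main.v *)
Require Import Defs.
From HB Require Import structures.
From mathcomp Require Import all_boot all_order all_algebra.
From mathcomp Require Import complex.
From mathcomp Require Import reals.
Import Order.TTheory GRing.Theory Num.Theory.
Local Open Scope ring_scope.

Section H.
Variable R : realType.
Variable n : nat.
Local Notation C := (R[i]).

Lemma sum_ind (F : 'I_n -> C) (i : 'I_n) :
  \sum_l F l * (l == i)%:R = F i.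
Proof.
rewrite (bigD1 i) //= eqxx mulr1 big1 ?addr0 // => l /negbTE ->.
by rewrite mulr0.
Qed.

Definition vec2 (i j : 'I_n) (a b : C) : 'cV[C]_n :=
  \col_k (a * (k == i)%:R + b * (k == j)%:R).

Lemma qform_vec2 (A : 'M[C]_n) i j a b :
  qform A (vec2 i j a b) =
  (A i i * a + A i j * b) * Num.conj a + (A j i * a + A j j * b) * Num.conj b.
Proof.
rewrite /qform.
have E : forall k, (A *m vec2 i j a b) k ord0 = A k i * a + A k j * b.
  move=> k; rewrite mxE.
  under eq_bigr do rewrite mxE mulrDr !mulrA.
  by rewrite big_split /= !sum_ind.
under eq_bigr do rewrite E mxE rmorphD !rmorphM /= !rmorph_nat mulrDr !mulrA.
by rewrite big_split /= !sum_ind.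
Qed.

Lemma qformZ (c : C) (A : 'M[C]_n) x : qform (c *: A) x = c * qform A x.
Proof.
rewrite /qform mulr_sumr; apply: eq_bigr => k _.
by rewrite -scalemxAl mxE mulrA.
Qed.

Lemma pos_diag (A : 'M[C]_n) i : is_pos A -> 0 <= A i i.
Proof.
move=> /(_ (vec2 i i 1 0)); rewrite qform_vec2.
by rewrite !mulr1 !mulr0 !addr0 conjC0 conjC1 mulr0 addr0 mulr1.
Qed.

Lemma tr_ge0 (A : 'M[C]_n) : is_pos A -> 0 <= \tr A.
Proof. by move=> pA; rewrite /mxtrace sumr_ge0 // => i _; apply: pos_diag. Qed.

Lemma pos_tr0 (A : 'M[C]_n) : is_pos A -> \tr A = 0 -> A = 0.
Proof.
move=> pA tr0.
have D : forall i, A i i = 0.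
  move=> i; apply/eqP; move: tr0 => /eqP; rewrite /mxtrace psumr_eq0.
    by move=> /allP /(_ i (mem_index_enum _)) /implyP ->.
  by move=> k _; apply: pos_diag.
apply/matrixP => i j; rewrite mxE.
case: (eqVneq i j) => [<-|ij]; first exact: D.
have Q : forall c, 0 <= c * A i j + Num.conj c * A j i.
  move=> c; have := pA (vec2 i j 1 c).
  rewrite qform_vec2 !D conjC1 !mulr1 !mul0r !add0r !addr0.
  by rewrite mulrC [_ * Num.conj c]mulrC.
have S : A i j + A j i = 0.
  apply/le_anti; apply/andP; split.
    by have := Q (-1); rewrite rmorphN rmorph1 !mulN1r -opprD oppr_ge0.
  by have := Q 1; rewrite rmorph1 !mul1r.
have ci : Num.conj ('i : R[i]) = - 'i by exact: conjCi.
have ic : ('i : R[i]) != 0 by exact: neq0Ci.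
move: ci ic; set c := ('i : R[i]); clearbody c => ci ic.
have T : c * (A i j - A j i) = 0.
  apply/le_anti; apply/andP; split.
    have := Q (- c); have -> : Num.conj (- c) = c.
      by rewrite rmorphN -[X in - X]/(Num.conj c) ci opprK.
    rewrite mulNr.
    by rewrite mulrBr addrC subr_ge0 subr_le0.
  by have := Q c; rewrite ci mulNr mulrBr.
move/eqP: T; rewrite mulf_eq0 (negbTE ic) /= subr_eq0 => /eqP E.
by move: S; rewrite E -mulr2n => /eqP; rewrite mulrn_eq0 /= => /eqP.
Qed.

Lemma cge0 (z : C) : 0 <= z -> z = real_complex R (complex.Re z).
Proof. by move=> /ger0_Im h; case: z h => a b /= ->. Qed.

Lemma cneq0 (s : R) : s != 0 -> real_complex R s != 0.
Proof. by move=> h; rewrite -(rmorph0 (real_complex R)) (inj_eq (@complexI _)). Qed.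

End H.
Arguments pos_tr0 {R n}.
Arguments tr_ge0 {R n}.
Arguments qformZ {R n}.
Arguments cge0 {R}.
Arguments cneq0 {R}.

Theorem theorem4p4 (R : realType) :
  forall n : nat,
    (* the transpose lands in Pos(H) *)
    (forall u : Selt R n, S_valid u -> is_pos (transpose_incl u)) /\
    (* it is a morphism in Mod_{R>=0}: preserves 0, +, and scaling by s >= 0 *)
    transpose_incl (@S0 R n) = 0 /\
    (forall u v : Selt R n, S_valid u -> S_valid v ->
       transpose_incl (S_add u v) = transpose_incl u + transpose_incl v) /\
    (forall (s : R) (u : Selt R n), 0 <= s -> S_valid u ->
       transpose_incl (S_scale s u) = rscale s (transpose_incl u)) /\
    (* it is bijective S(DM(H)) -> Pos(H), hence an isomorphism *)
    (forall u v : Selt R n, S_valid u -> S_valid v ->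
       transpose_incl u = transpose_incl v -> u = v) /\
    (forall A : 'M[R[i]]_n, is_pos A ->
       exists2 u : Selt R n, S_valid u & transpose_incl u = A) /\
    (* naturality in unitaries: S o DM ~= Pos as functors FdHilb_Un -> Mod *)
    (forall U : 'M[R[i]]_n, unitary_mx U ->
       forall u : Selt R n, S_valid u ->
         transpose_incl (S_map U u) = U *m transpose_incl u *m herm_adj U).
Proof.
move=> n.
split.
  case=> [_ x|s rho [s0 [prho _]] x] /=; first by rewrite /qform big1 // => k _;
    rewrite mul0mx mxE mul0r.
  by rewrite /rscale qformZ mulr_ge0 // ler0c ltW.
split; first by [].
split.
  case=> [|s x] [|t y] /=; try by rewrite ?add0r ?addr0.
  move=> [s0 _] [t0 _].
  rewrite /rscale scalerDr !scalerA -!rmorphM /=.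
  have st' : s + t != 0 by rewrite gt_eqF // addr_gt0.
  by rewrite !mulrA ![(s + t) * _]mulrC !mulfK.
split.
  move=> s [|t x] s0 _ /=; first by rewrite /rscale scaler0.
  case: eqP => [->|_] /=; first by rewrite /rscale rmorph0 scale0r.
  by rewrite /rscale scalerA rmorphM.
split.
  case=> [|s x] [|t y] //= => [_ [t0 [_ ty]]|[s0 [_ sx]] _|[s0 [_ sx]] [t0 [_ ty]]].
  - move=> /(congr1 mxtrace); rewrite /rscale mxtraceZ ty mulr1 mxtrace0.
    by move=> /esym /complexI /eqP; rewrite gt_eqF.
  - move=> /(congr1 mxtrace); rewrite /rscale mxtraceZ sx mulr1 mxtrace0.
    by move=> /complexI /eqP; rewrite gt_eqF.
  move=> E; have := congr1 mxtrace E; rewrite /rscale !mxtraceZ sx ty !mulr1.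
  move=> /complexI st; subst t; congr Spt.
  have s0' : ((s%:C)%C : R[i]) != 0 by apply: cneq0; rewrite gt_eqF.
  by move: E; rewrite /rscale => /(congr1 (fun M => ((s%:C)%C)^-1 *: M)); rewrite !scalerK.
split.
  move=> A pA.
  have [t0|tn0] := eqVneq (\tr A) 0.
    by exists S0 => //=; rewrite (pos_tr0 _ pA t0).
  have tg := tr_ge0 _ pA.
  set s := complex.Re (\tr A).
  have Es : \tr A = (s%:C)%C by exact: cge0.
  have sn0 : ((s%:C)%C : R[i]) != 0 by rewrite -Es.
  exists (Spt s (((s%:C)%C)^-1 *: A)) => /=.
    split; first by rewrite lt_def; apply/andP; split;
      [apply: contra sn0 => /eqP ->; rewrite rmorph0|
       by rewrite -ler0c -Es].
    split; last by rewrite mxtraceZ -Es mulVf.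
    by move=> x; rewrite qformZ mulr_ge0 ?invr_ge0 -?Es.
  by rewrite /rscale scalerA mulfV ?scale1r.
move=> U _ [|s rho] _ /=; first by rewrite mulmx0 mul0mx.
by rewrite /rscale (scalemxAl _ (U *m rho)) (scalemxAr _ U rho).
Qed.
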